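(* Let $\mathcal I$ be a Stable Marriage instance containing $r$ men $m^d_1,\dots,m^d_r$ and $r$ women $w^d_1,\dots,w^d_r$ such that for every $i\in[r]$ (indices taken modulo $r$) the preference list of $m^d_i$ begins with $w^d_i\succ w^d_{i+1}\succ\dots\succ w^d_{r+i-1}$ and the preference list of $w^d_i$ begins with $m^d_i\succ m^d_{i+1}\succ\dots\succ m^d_{r+i-1}$ (the remaining agents follow in arbitrary order). Then for every list $S$ of at most $r-1$ swap operations, every stable matching of the instance $\mathcal I[S]$ contains the pairs $\{m^d_i,w^d_i\}$ for all $i\in[r]$.
   Context: A Stable Marriage (SM) instance consists of a set $U$ of men and a set $W$ of women with $|U|=|W|=n$, and for every agent a strict total order (preference list) over all agents of the opposite gender. A matching is a set of man–woman pairs in which each agent appears at most once. A man–woman pair $\{m,w\}$ blocks a matching $M$ if ($m$ is unassigned or prefers $w$ to his partner in $M$) and ($w$ is unassigned or prefers $m$ to her partner in $M$); $M$ is stable if no pair blocks it. A swap operation exchanges two adjacent agents in the preference list of one agent (of the whole instance, possibly a non-dummy agent or a dummy agent). $\mathcal I[S]$ denotes the instance obtained by applying the swaps in the list $S$ to $\mathcal I$. *)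

(* Defs.v *)
From mathcomp Require Import all_boot.
Set Implicit Arguments. Unset Strict Implicit. Unset Printing Implicit Defensive.

(* Stable Marriage instance with n men and n women, both indexed by 'I_n.
   Preference lists are sequences, most preferred first. *)
Record SMinstance (n : nat) := SMI {
  mpref : 'I_n -> seq 'I_n;
  wpref : 'I_n -> seq 'I_n
}.

Definition valid_instance n (I : SMinstance n) : Prop :=
  (forall m, perm_eq (mpref I m) (enum 'I_n)) /\
  (forall w, perm_eq (wpref I w) (enum 'I_n)).

Definition prefers n (l : seq 'I_n) (x y : 'I_n) : bool := index x l < index y l.

Definition is_matching n (M : {set 'I_n * 'I_n}) : Prop :=
  (forall m w w', (m, w) \in M -> (m, w') \in M -> w = w') /\
  (forall m m' w, (m, w) \in M -> (m', w) \in M -> m = m').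

Definition blocks n (I : SMinstance n) (M : {set 'I_n * 'I_n}) (m w : 'I_n) : Prop :=
  (forall w', (m, w') \in M -> prefers (mpref I m) w w') /\
  (forall m', (m', w) \in M -> prefers (wpref I w) m m').

Definition stable_matching n (I : SMinstance n) (M : {set 'I_n * 'I_n}) : Prop :=
  is_matching M /\ forall m w, ~ blocks I M m w.

Definition swap_seq T (j : nat) (s : seq T) : seq T :=
  take j s ++ rev (take 2 (drop j s)) ++ drop j.+2 s.

(* A swap operation: on a man (sw_man = true) or a woman (false),
   exchanging positions sw_pos and sw_pos+1 in that agent's list. *)
Record swap (n : nat) := Swap {
  sw_man : bool;
  sw_agent : 'I_n;
  sw_pos : nat
}.

Definition valid_swap n (s : swap n) : bool := (sw_pos s).+1 < n.

Definition apply_swap n (I : SMinstance n) (s : swap n) : SMinstance n :=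
  if sw_man s then
    SMI (fun m => if m == sw_agent s then swap_seq (sw_pos s) (mpref I m) else mpref I m)
        (wpref I)
  else
    SMI (mpref I)
        (fun w => if w == sw_agent s then swap_seq (sw_pos s) (wpref I w) else wpref I w).

Definition apply_swaps n (I : SMinstance n) (S : seq (swap n)) : SMinstance n :=
  foldl (@apply_swap n) I S.

(* Main.v *)
Require Import Defs.
From mathcomp Require Import all_boot zify.
From Stdlib Require Import Classical.
Set Implicit Arguments. Unset Strict Implicit. Unset Printing Implicit Defensive.

Definition pref n (b : bool) (I : SMinstance n) a := if b then mpref I a else wpref I a.
Definition Psw n (b : bool) (a : 'I_n) (s : swap n) := (sw_man s == b) && (sw_agent s == a).

Lemma pref_apply n b (I : SMinstance n) s a :
  pref b (apply_swap I s) a =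
  if Psw b a s then swap_seq (sw_pos s) (pref b I a) else pref b I a.
Proof.
rewrite /pref /apply_swap /Psw; case: b; case: (sw_man s) => //=;
by rewrite eq_sym.
Qed.

Lemma swap_perm (T : eqType) p (l : seq T) : perm_eq (swap_seq p l) l.
Proof.
rewrite /swap_seq -[p.+2]add2n -drop_drop.
rewrite -[X in perm_eq _ X](cat_take_drop p l) perm_cat2l.
rewrite -[X in perm_eq _ X](cat_take_drop 2 (drop p l)) perm_cat2r.
by rewrite perm_rev.
Qed.

Lemma swap_index_gen (T : eqType) (a d : seq T) x y :
  uniq (a ++ d) ->
  index x (a ++ d) - index y (a ++ d) <=
  (index x (a ++ rev (take 2 d) ++ drop 2 d) - index y (a ++ rev (take 2 d) ++ drop 2 d)).+1.
Proof.
case: d => [|u [|v b]] /=.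
- by rewrite cats0.
- by [].
rewrite take0 drop0 /rev /= !index_cat /= cat_uniq /= !negb_or.
move=> _.
have hx := index_mem x a; have hy := index_mem y a.
case xa: (x \in a); case ya: (y \in a); move: hx hy; rewrite xa ya => hx hy; do ? case: ifP => _; lia.
Qed.

Lemma swap_index (T : eqType) p (l : seq T) x y : uniq l ->
  index x l - index y l <= (index x (swap_seq p l) - index y (swap_seq p l)).+1.
Proof.
move=> U; have := @swap_index_gen T (take p l) (drop p l) x y.
rewrite cat_take_drop /swap_seq -[p.+2]add2n -drop_drop; exact.
Qed.

Lemma count_bound n (S : seq (swap n)) (I : SMinstance n) b a x y :
  (forall b a, perm_eq (pref b I a) (enum 'I_n)) ->
  index x (pref b (apply_swaps I S) a) < index y (pref b (apply_swaps I S) a) ->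
  index x (pref b I a) - index y (pref b I a) <= count (Psw b a) S.
Proof.
elim: S I => [|s S IH] I HI /=.
  rewrite /apply_swaps /=; lia.
move=> H.
have HI' : forall b a, perm_eq (pref b (apply_swap I s) a) (enum 'I_n).
  move=> b' a'; rewrite pref_apply; case: ifP => // _.
  exact: perm_trans (swap_perm _ _) (HI b' a').
have := IH _ HI' H; rewrite pref_apply.
case: ifP => _ h.
have U : uniq (pref b I a) by rewrite (perm_uniq (HI b a)) enum_uniq.
rewrite add1n; apply: (leq_trans (swap_index (sw_pos s) x y U)); by rewrite ltnS.
by rewrite add0n.
Qed.

Definition dist r (k t : nat) := if k <= t then t - k else r - k + t.

Lemma index_rot_ord r (k t : 'I_r) : index t (rot k (enum 'I_r)) = dist r k t.
Proof.
rewrite -(index_map val_inj) map_rot val_enum_ord /rot drop_iota take_iota add0n.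
have Hk := ltn_ord k; have Ht := ltn_ord t.
rewrite (_ : val t = nat_of_ord t) //.
rewrite index_cat mem_iota /dist.
case: (leqP k t) => Hkt.
- rewrite ifT; last by lia.
  have E : nth 0 (iota k (r - k)) (t - k) = t by rewrite nth_iota; lia.
  rewrite -[in index _ _]E index_uniq ?iota_uniq // size_iota; lia.
- rewrite /=.
  rewrite size_iota (_ : minn k r = k); last by lia.
  have E : nth 0 (iota 0 k) t = t by rewrite nth_iota; lia.
  rewrite -[in index _ _]E index_uniq ?iota_uniq // size_iota; lia.
Qed.

Lemma idx_dummy n r (d : 'I_r -> 'I_n) (L : seq 'I_n) (k : 'I_r) :
  injective d -> take r L = map d (rot k (enum 'I_r)) ->
  (forall t, index (d t) L = dist r k t) /\
  (forall x, x \in L -> index x L < r -> exists t, x = d t).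
Proof.
move=> Hd HL.
have Hs : size (take r L) = r by rewrite HL size_map size_rot size_enum_ord.
split.
- move=> t; rewrite -(cat_take_drop r L) index_cat.
  have Ht : d t \in take r L by rewrite HL map_f // mem_rot mem_enum.
  by rewrite Ht HL index_map // index_rot_ord.
- move=> x xL; rewrite -(cat_take_drop r L) index_cat.
  case: ifP => [xt _| _]; last by rewrite Hs; lia.
  by move: xt; rewrite HL => /mapP[t _ ->]; exists t.
Qed.

Lemma sum1_ord r : \sum_(e : 'I_r) 1 = r.
Proof. by rewrite sum1_card card_ord. Qed.

Lemma dist_lt r k t e : k < r -> t < r -> e < r -> t != k ->
  dist r k t <= dist r k e -> dist r t e < dist r k e.
Proof. move=> hk ht he /eqP tk; rewrite /dist; do ? case: ifP => ?; lia. Qed.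

Lemma sum_cover r (k : 'I_r) j :
  \sum_(e : 'I_r) (dist r k e < j : nat) <= j.
Proof.
rewrite (eq_bigr (fun e : 'I_r => if dist r k e < j then 1 else 0)); last by move=> e _; case: ifP.
rewrite -big_mkcond sum1dep_card cardE.
rewrite -(size_map (fun e : 'I_r => dist r k e)) -[j in _ <= j](size_iota 0 j).
apply: uniq_leq_size.
  rewrite map_inj_in_uniq ?enum_uniq // => e1 e2 _ _ E; apply: ord_inj.
  move: E; have := ltn_ord k; have := ltn_ord e1; have := ltn_ord e2; rewrite /dist.
  do ? case: ifP => ?; lia.
move=> x /mapP[e]; rewrite mem_enum inE => He ->; rewrite mem_iota; lia.
Qed.

Lemma sum_count (I : finType) T (F : I -> pred T) (P : pred I) (s : seq T) :
  (forall x k1 k2, P k1 -> P k2 -> F k1 x -> F k2 x -> k1 = k2) ->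
  \sum_(k | P k) count (F k) s <= size s.
Proof.
move=> H; elim: s => [|x s IH] /=; first by rewrite big1.
rewrite big_split /= -add1n leq_add //.
case: (pickP (fun k => P k && F k x)) => [k0 /andP[P0 F0]|none].
  rewrite (bigD1 k0) //= F0 big1 // => k /andP[Pk nk].
  by case Fk: (F k x) => //; rewrite (H x k k0 Pk P0 Fk F0) eqxx in nk.
by rewrite big1 // => k Pk; have := none k; rewrite Pk /= => ->.
Qed.

Lemma apply_swaps_perm n (S : seq (swap n)) (I : SMinstance n) :
  (forall b a, perm_eq (pref b I a) (enum 'I_n)) ->
  (forall b a, perm_eq (pref b (apply_swaps I S) a) (enum 'I_n)).
Proof.
elim: S I => [|s S IH] I HI //=.
apply: IH => b' a'; rewrite pref_apply; case: ifP => // _.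
exact: perm_trans (swap_perm _ _) (HI b' a').
Qed.

Theorem mainTheorem4 (n r : nat) (I : SMinstance n)
  (dm dw : 'I_r -> 'I_n) :
  valid_instance I ->
  injective dm -> injective dw ->
  (forall i : 'I_r, take r (mpref I (dm i)) = map dw (rot i (enum 'I_r))) ->
  (forall i : 'I_r, take r (wpref I (dw i)) = map dm (rot i (enum 'I_r))) ->
  forall S : seq (swap n), size S <= r - 1 -> all (@valid_swap n) S ->
  forall M : {set 'I_n * 'I_n}, stable_matching (apply_swaps I S) M ->
  forall i : 'I_r, (dm i, dw i) \in M.
Proof.
move=> Hv Hdm Hdw Hm Hw S HS _ M [[Hm1 Hm2] Hst] i.
have r0 : 0 < r by apply: leq_ltn_trans (leq0n _) (ltn_ord i).
case: (boolP ((dm i, dw i) \in M)) => // Hbad; exfalso.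
have HI : forall b a, perm_eq (pref b I a) (enum 'I_n).
  move: Hv; rewrite /valid_instance => -[H1 H2] [] a; [exact: H1 | exact: H2].
have HI' := apply_swaps_perm S HI.
have HcS : forall P, count P S < r by move=> P; have := count_size P S; lia.
pose ag (b : bool) (k : 'I_r) := if b then dm k else dw k.
have key : forall k : 'I_r, exists p : 'I_r * bool, (dm k, dw k) \notin M ->
   [/\ (dm p.1, dw p.1) \notin M, p.1 != k &
       dist r k p.1 <= count (Psw p.2 (ag p.2 k)) S].
  move=> k; case: (boolP ((dm k, dw k) \in M)) => Hk; first by exists (k, true).
  have := Hst (dm k) (dw k); rewrite /blocks.
  move=> /not_and_or [/not_all_ex_not [w' H1] | /not_all_ex_not [m' H1]].
  - have [Mw' np] := imply_to_and _ _ H1.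
    have nw : w' != dw k by apply/eqP => E; rewrite -E Mw' in Hk.
    have mem' : forall x, x \in pref true (apply_swaps I S) (dm k).
      by move=> x; rewrite (perm_mem (HI' true (dm k))) mem_enum.
    have lt : index w' (pref true (apply_swaps I S) (dm k)) <
              index (dw k) (pref true (apply_swaps I S) (dm k)).
      move/negP: np; rewrite /prefers -leqNgt leq_eqVlt => /orP[/eqP E|//].
      by move: (index_inj w' (mem' _) (mem' _) E) => E'; rewrite E' eqxx in nw.
    have cb := count_bound HI lt.
    have [Hidx Hnd] := idx_dummy Hdw (Hm k).
    move: cb; rewrite /= Hidx /dist leqnn subnn subn0.
    case: (ltnP (index w' (mpref I (dm k))) r) => hr.
    + have memL : w' \in mpref I (dm k).
        by rewrite (perm_mem (HI true (dm k))) mem_enum.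
      have [t Et] := Hnd w' memL hr; subst w'.
      move=> cb; exists (t, true) => _ /=; split.
      * apply/negP => Mt; have := Hm2 _ _ _ Mw' Mt => /Hdm E.
        by rewrite E eqxx in nw.
      * by apply/eqP => E; rewrite E eqxx in nw.
      * by rewrite Hidx in cb.
    + by move=> cb; have := leq_trans hr cb; rewrite leqNgt HcS.
  - have [Mm' np] := imply_to_and _ _ H1.
    have nm : m' != dm k by apply/eqP => E; rewrite -E Mm' in Hk.
    have mem' : forall x, x \in pref false (apply_swaps I S) (dw k).
      by move=> x; rewrite (perm_mem (HI' false (dw k))) mem_enum.
    have lt : index m' (pref false (apply_swaps I S) (dw k)) <
              index (dm k) (pref false (apply_swaps I S) (dw k)).
      move/negP: np; rewrite /prefers -leqNgt leq_eqVlt => /orP[/eqP E|//].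
      by move: (index_inj m' (mem' _) (mem' _) E) => E'; rewrite E' eqxx in nm.
    have cb := count_bound HI lt.
    have [Hidx Hnd] := idx_dummy Hdm (Hw k).
    move: cb; rewrite /= Hidx /dist leqnn subnn subn0.
    case: (ltnP (index m' (wpref I (dw k))) r) => hr.
    + have memL : m' \in wpref I (dw k).
        by rewrite (perm_mem (HI false (dw k))) mem_enum.
      have [t Et] := Hnd m' memL hr; subst m'.
      move=> cb; exists (t, false) => _ /=; split.
      * apply/negP => Mt; have := Hm1 _ _ _ Mm' Mt => /Hdw E.
        by rewrite E eqxx in nm.
      * by apply/eqP => E; rewrite E eqxx in nm.
      * by rewrite Hidx in cb.
    + by move=> cb; have := leq_trans hr cb; rewrite leqNgt HcS.
have [f Hf] := fin_all_exists key.
pose bad (k : 'I_r) := (dm k, dw k) \notin M.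
have cov : forall e : 'I_r, [exists k, bad k && (dist r k e < dist r k (f k).1)].
  move=> e; case: (boolP [exists k, _]) => // /existsPn H; exfalso.
  case: (@arg_minnP _ i bad (fun k => dist r k e) Hbad) => k bk kmin.
  have [bt tk dk] := Hf k bk.
  have := H k; rewrite bk /= -leqNgt => le.
  have := kmin _ bt.
  have := dist_lt (ltn_ord k) (ltn_ord (f k).1) (ltn_ord e) tk le.
  lia.
have c1 : r <= \sum_(k | bad k) \sum_(e : 'I_r) (dist r k e < dist r k (f k).1 : nat).
  rewrite exchange_big /= -[X in X <= _]sum1_ord; apply: leq_sum => e _.
  have /existsP [k0 /andP[b0 c0]] := cov e.
  by rewrite (bigD1 k0) //= c0 add1n ltnS.
have c2 : \sum_(k | bad k) \sum_(e : 'I_r) (dist r k e < dist r k (f k).1 : nat)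
          <= \sum_(k | bad k) count (Psw (f k).2 (ag (f k).2 k)) S.
  apply: leq_sum => k bk; apply: leq_trans (sum_cover _ _) _.
  by have [_ _ ->] := Hf k bk.
have c3 : \sum_(k | bad k) count (Psw (f k).2 (ag (f k).2 k)) S <= size S.
  apply: sum_count => x k1 k2 _ _; rewrite /Psw /ag.
  move=> /andP[/eqP e1 /eqP a1] /andP[/eqP e2 /eqP a2].
  have eb : (f k1).2 = (f k2).2 by rewrite -e1 -e2.
  move: a1 a2; rewrite -eb; case: (f k1).2 => /= -> E; [exact: Hdm | exact: Hdw].
lia.
Qed.
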